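(* Let $\mathscr{A}$ be a $C^*$-algebra with identity such that the set $\mathscr{A}'_m$ of all linear multiplicative functionals $\varphi\colon\mathscr{A}\to\mathbb{C}$ is total (i.e., if $\varphi(a)=0$ for all $\varphi\in\mathscr{A}'_m$ then $a=0$). Let $\mathscr{X}$ be a right $\mathscr{A}$-module which is also a normed space. Let $n\geq 2$ and let $E, F\colon \mathscr{X}^n\to\mathscr{A}$ be multi-$\mathscr{A}$-linear functions, and assume that $E$ is bounded and strong. Then the following are equivalent: (i) for all $x_1,\dots,x_n\in\mathscr{X}$, $E(x_1,\dots,x_n)=0$ implies $F(x_1,\dots,x_n)=0$; (ii) there exists $c\in\mathscr{A}$ such that $F(x_1,\dots,x_n)=cE(x_1,\dots,x_n)$ for all $x_1,\dots,x_n\in\mathscr{X}$. Moreover, each of these conditions implies that $F$ is bounded.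
   Context: A right $\mathscr{A}$-module $\mathscr{X}$ is a complex vector space with a right $\mathscr{A}$-action satisfying $(\alpha x)a=x(\alpha a)=\alpha(xa)$. A function $F\colon\mathscr{X}^n\to\mathscr{A}$ is multi-$\mathscr{A}$-linear if for all $x_1,\dots,x_n,y_j\in\mathscr{X}$, $\alpha\in\mathbb{C}$, $a\in\mathscr{A}$ and $j=1,\dots,n$: (A) $F$ is additive in the $j$-th variable; (B) $F(x_1,\dots,\alpha x_j a,\dots,x_n)=\alpha F(x_1,\dots,x_n)a$ if $j$ is even; (C) $F(x_1,\dots,\alpha x_j a,\dots,x_n)=\overline{\alpha}a^*F(x_1,\dots,x_n)$ if $j$ is odd. $F$ is bounded if there is $M$ with $\|F(x_1,\dots,x_n)\|\le M\|x_1\|\cdots\|x_n\|$ for all $x_i$. With $G_{\mathscr{A}}$ the set of invertible elements of $\mathscr{A}$, $F$ is strong if there exists $w\in\mathscr{X}$ with $F(w,w,\dots,w)\in G_{\mathscr{A}}$. *)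

(* Defs.v *)
From HB Require Import structures.
From mathcomp Require Import all_boot all_order all_algebra.
From mathcomp Require Import reals.
From mathcomp Require Export complex.
Set Implicit Arguments. Unset Strict Implicit. Unset Printing Implicit Defensive.
Import Order.TTheory GRing.Theory Num.Theory.
Local Open Scope ring_scope.

Notation cmod := ComplexField.Normc.normc.

Section Defs.
Variable R : realType.
Local Notation C := R[i].

Definition is_cnorm (V : lmodType C) (nrm : V -> R) : Prop :=
  [/\ forall v, 0 <= nrm v,
      forall v, nrm v = 0 -> v = 0,
      forall u v, nrm (u + v) <= nrm u + nrm v
    & forall (a : C) v, nrm (a *: v) = cmod a * nrm v].

Definition norm_complete (V : lmodType C) (nrm : V -> R) : Prop :=
  forall u : nat -> V,
    (forall e : R, 0 < e -> exists N, forall m k, (N <= m)%N -> (N <= k)%N ->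
        nrm (u m - u k) < e) ->
    exists l : V, forall e : R, 0 < e -> exists N, forall m, (N <= m)%N ->
        nrm (u m - l) < e.

Definition is_Cstar_algebra (A : algType C) (star : A -> A) (nrm : A -> R)
  : Prop :=
  [/\ [/\ is_cnorm nrm,
          forall a b : A, nrm (a * b) <= nrm a * nrm b
        & norm_complete nrm],
      [/\ forall a b : A, star (a + b) = star a + star b,
          forall (al : C) (a : A), star (al *: a) = conjc al *: star a,
          forall a b : A, star (a * b) = star b * star a
        & forall a : A, star (star a) = a]
    & forall a : A, nrm (star a * a) = nrm a ^+ 2].

Definition lin_mult_functional (A : algType C) (phi : A -> C) : Prop :=
  [/\ forall a b, phi (a + b) = phi a + phi b,
      forall (al : C) a, phi (al *: a) = al * phi a
    & forall a b, phi (a * b) = phi a * phi b].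

Definition mult_functionals_total (A : algType C) : Prop :=
  forall a : A, (forall phi : A -> C, lin_mult_functional phi -> phi a = 0) ->
    a = 0.

Definition invertible (A : algType C) (a : A) : Prop :=
  exists b : A, a * b = 1 /\ b * a = 1.

Definition right_module (A : algType C) (X : lmodType C) (act : X -> A -> X)
  : Prop :=
  [/\ forall x y a, act (x + y) a = act x a + act y a,
      forall x a b, act x (a + b) = act x a + act x b,
      forall x a b, act x (a * b) = act (act x a) b,
      forall (al : C) x a, act (al *: x) a = act x (al *: a)
    & forall (al : C) x a, act x (al *: a) = al *: act x a].

(* ---- multi-A-linear functions X^n -> A ----
   Variables are indexed by i : 'I_n (0-based), so the paper's j-th variable
   is i with j = i + 1; "j even" means odd i, "j odd" means ~~ odd i. *)
Definition upd (X : Type) n (x : 'I_n -> X) (i : 'I_n) (y : X) : 'I_n -> X :=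
  fun k => if k == i then y else x k.

Definition multi_A_linear (A : algType C) (star : A -> A) (X : lmodType C)
  (act : X -> A -> X) n (F : ('I_n -> X) -> A) : Prop :=
  [/\ forall (x : 'I_n -> X) (i : 'I_n) (y z : X), F (upd x i (y + z)) = F (upd x i y) + F (upd x i z),
      forall (x : 'I_n -> X) (i : 'I_n) (al : C) (a : A), odd i ->
        F (upd x i (act (al *: x i) a)) = al *: (F x * a)
    & forall (x : 'I_n -> X) (i : 'I_n) (al : C) (a : A), ~~ odd i ->
        F (upd x i (act (al *: x i) a)) = conjc al *: (star a * F x)].

Definition bounded_multi (A : algType C) (nrmA : A -> R) (X : lmodType C)
  (nrmX : X -> R) n (F : ('I_n -> X) -> A) : Prop :=
  exists M : R, forall x : 'I_n -> X, nrmA (F x) <= M * \prod_(i < n) nrmX (x i).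

Definition strong_multi (A : algType C) (X : lmodType C) n
  (F : ('I_n -> X) -> A) : Prop :=
  exists w : X, invertible (F (fun _ => w)).
End Defs.

(* Main.v *)
Require Import Defs.
From HB Require Import structures.
From mathcomp Require Import all_boot all_order all_algebra.
From mathcomp Require Import reals complex.
From Stdlib Require Import FunctionalExtensionality.
Import Order.TTheory GRing.Theory Num.Theory.
Local Open Scope ring_scope.

Lemma upd_eq (X : Type) n (x : 'I_n -> X) i v : upd x i v i = v.
Proof. by rewrite /upd eqxx. Qed.

Lemma upd_upd (X : Type) n (x : 'I_n -> X) i u v : upd (upd x i u) i v = upd x i v.
Proof. apply: functional_extensionality => k; rewrite /upd /=; by case: (k == i). Qed.

Lemma upd_same (X : Type) n (x : 'I_n -> X) i : upd x i (x i) = x.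
Proof. apply: functional_extensionality => k; rewrite /upd; case: eqP => // ->. by []. Qed.

Section Helpers.
Local Notation C R := (R[i]).

Lemma ml_add (R : realType) (A : algType R[i]) (star : A -> A) (X : lmodType R[i])
  (act : X -> A -> X) n (G : ('I_n -> X) -> A) (hG : multi_A_linear star act G)
  x k u v : G (upd x k (u + v)) = G (upd x k u) + G (upd x k v).
Proof. by case: hG => h1 _ _; apply: h1. Qed.

Lemma ml_act (R : realType) (A : algType R[i]) (star : A -> A) (X : lmodType R[i])
  (act : X -> A -> X) n (G : ('I_n -> X) -> A) (hG : multi_A_linear star act G)
  (comm : forall a b : A, a * b = b * a)
  x (k : 'I_n) v a :
  G (upd x k (act v a)) = (if odd k then a else star a) * G (upd x k v).
Proof.
case: hG => _ h2 h3; set x' := upd x k v.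
case: (boolP (odd k)) => hk.
  have := h2 x' k 1 a hk; rewrite /x' upd_eq scale1r upd_upd scale1r => ->.
  by rewrite comm.
have := h3 x' k 1 a hk; rewrite /x' upd_eq scale1r upd_upd rmorph1 scale1r => ->.
by [].
Qed.

End Helpers.
Arguments ml_add {R A star X act n G} hG x k u v.
Arguments ml_act {R A star X act n G} hG comm x k v a.

Theorem theorem3p6 (R : realType) (A : algType R[i]) (star : A -> A)
  (nrmA : A -> R) (hA : is_Cstar_algebra star nrmA)
  (htot : mult_functionals_total A)
  (X : lmodType R[i]) (act : X -> A -> X) (hX : right_module act)
  (nrmX : X -> R) (hnX : is_cnorm nrmX)
  (n : nat) (hn : (2 <= n)%N) (E F : ('I_n -> X) -> A)
  (hE : multi_A_linear star act E) (hF : multi_A_linear star act F)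
  (hEb : bounded_multi nrmA nrmX E) (hEs : strong_multi E) :
  ((forall x : 'I_n -> X, E x = 0 -> F x = 0) <->
   (exists c : A, forall x : 'I_n -> X, F x = c * E x)) /\
  ((forall x : 'I_n -> X, E x = 0 -> F x = 0) -> bounded_multi nrmA nrmX F) /\
  ((exists c : A, forall x : 'I_n -> X, F x = c * E x) -> bounded_multi nrmA nrmX F).
Proof.
case: hA => [[[nrm0 _ _ _] nrmM _] [_ _ _ starK] _].
have comm : forall a b : A, a * b = b * a.
  move=> a b; apply/eqP; rewrite -subr_eq0; apply/eqP; apply: htot.
  move=> phi [ph1 ph2 ph3].
  rewrite ph1 -scaleN1r ph2 !ph3 mulN1r mulrC; exact: subrr.
have sigK : forall (k : 'I_n) (a : A),
    (if odd k then (if odd k then a else star a) else star (if odd k then a else star a)) = a.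
  by move=> k a; case: (odd k).
have ml_opp : forall G : ('I_n -> X) -> A, multi_A_linear star act G ->
    forall x k v, G (upd x k (- v)) = - G (upd x k v).
  move=> G hG x k v.
  have h0 : G (upd x k 0) = 0.
    have h : G (upd x k 0) + G (upd x k 0) = G (upd x k 0) + 0.
      by rewrite -(ml_add hG) !addr0.
    exact: addrI h.
  have := ml_add hG x k v (- v); rewrite subrr h0 => /eqP.
  by rewrite eq_sym addrC addr_eq0 => /eqP.
have ii_bd : (exists c : A, forall x : 'I_n -> X, F x = c * E x) -> bounded_multi nrmA nrmX F.
  case=> c hc; case: hEb => M hM; exists (nrmA c * M) => x.
  rewrite hc; apply: le_trans (nrmM _ _) _; rewrite -mulrA.
  apply: ler_wpM2l; last exact: hM.
  exact: nrm0.
have i_ii : (forall x : 'I_n -> X, E x = 0 -> F x = 0) ->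
    exists c : A, forall x : 'I_n -> X, F x = c * E x.
  move=> hi.
  have nb : forall y (k : 'I_n) t, E y * F (upd y k t) = E (upd y k t) * F y.
    move=> y k t.
    set p := E y; set q := E (upd y k t).
    set sg := fun a : A => if odd k then a else star a.
    set u := act t (sg p); set v := act (y k) (sg q).
    have hE0 : E (upd y k (u - v)) = 0.
      rewrite (ml_add hE) (ml_opp _ hE) /u /v !(ml_act hE comm) upd_same.
      by rewrite /sg !sigK -/q -/p comm subrr.
    have := hi _ hE0.
    rewrite (ml_add hF) (ml_opp _ hF) /u /v !(ml_act hF comm) upd_same.
    by rewrite /sg !sigK => /eqP; rewrite subr_eq0 => /eqP.
  case: hEs => w [b [eb be]].
  set c := F (fun _ => w) * b.
  exists c.
  set D := fun x => F x - c * E x.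
  have Dadd : forall x k u v, D (upd x k (u + v)) = D (upd x k u) + D (upd x k v).
    move=> x k u v; rewrite /D (ml_add hF) (ml_add hE) mulrDr opprD addrACA //.
  have Dact : forall x (k : 'I_n) v a,
      D (upd x k (act v a)) = (if odd k then a else star a) * D (upd x k v).
    move=> x k v a; rewrite /D (ml_act hF comm) (ml_act hE comm) mulrBr.
    by rewrite !mulrA (comm c) /c !mulrA.
  have Dnb : forall y (k : 'I_n) t b', E y * b' = 1 -> D y = 0 -> D (upd y k t) = 0.
    move=> y k t b' hb' hDy.
    have hFy : F y = c * E y by apply/eqP; rewrite -subr_eq0; apply/eqP.
    have := nb y k t; rewrite hFy => h.
    rewrite /D; apply/eqP; rewrite subr_eq0; apply/eqP.
    have -> : F (upd y k t) = b' * (E y * F (upd y k t)) by rewrite mulrA (comm b' (E y)) hb' mul1r.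
    by rewrite h (comm (E (upd y k t))) (comm c) mulrA mulrA (comm b') hb' mul1r.
  have claim : forall m y b', E y * b' = 1 -> D y = 0 ->
      forall x, (#|[set i | x i != y i]| <= m)%N -> D x = 0.
    elim=> [|m IH] y b' hb' hDy x hcard.
      have -> : x = y; last exact: hDy.
      apply: functional_extensionality => i; apply/eqP; apply/negPn/negP => hne.
      have : (0 < #|[set i | x i != y i]|)%N by apply/card_gt0P; exists i; rewrite inE.
      by rewrite lt0n; move: hcard; rewrite leqn0 => ->.
    case: (set_0Vmem [set i | x i != y i]) => [h0|[k hk]].
      have -> : x = y; last exact: hDy.
      apply: functional_extensionality => i; apply/eqP; apply/negPn/negP => hne.
      have : i \in [set i | x i != y i] by rewrite inE.
      by rewrite h0 inE.
    set z := upd y k (x k).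
    set sg := fun a : A => if odd k then a else star a.
    set a := sg ((1 - E z) * b').
    set y' := upd y k (x k + act (y k) a).
    have Ey' : E y' * 1 = 1.
      rewrite mulr1 /y' (ml_add hE) (ml_act hE comm) upd_same -/z /a /sg sigK.
      by rewrite -mulrA (comm b') hb' mulr1 addrC subrK.
    have Dy' : D y' = 0 by apply: (Dnb y k _ b').
    have card1 : forall v, (#|[set i | upd x k v i != upd y k v i]| <= m)%N.
      move=> v.
      have hs : [set i | upd x k v i != upd y k v i] \subset [set i | x i != y i] :\ k.
        apply/subsetP => i; rewrite !inE /upd.
        by case: (i == k) => /=; rewrite ?eqxx.
      apply: leq_trans (subset_leq_card hs) _.
      move: hcard; rewrite (cardsD1 k) hk /=.
      by rewrite add1n ltnS.
    have D1 : D (upd x k (x k + act (y k) a)) = 0.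
      apply: (IH y' 1 Ey' Dy'); exact: card1.
    have D2 : D (upd x k (y k)) = 0.
      apply: (IH y b' hb' hDy).
      have := card1 (y k); by rewrite upd_same.
    move: D1; rewrite Dadd Dact D2 mulr0 addr0 upd_same //.
  move=> x; apply/eqP; rewrite -subr_eq0; apply/eqP.
  apply: (claim n (fun _ => w) b eb).
    by rewrite /D /c -mulrA be mulr1 subrr.
  apply: leq_trans (max_card _) _; by rewrite card_ord.
split; last split.
- split; last first.
    case=> c hc x hx; by rewrite hc hx mulr0.
  exact: i_ii.
- by move=> h; apply: ii_bd; apply: i_ii.
- exact: ii_bd.
Qed.
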